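(* In the standard LLP setup, suppose $\overline{K}=\overline{K_{mc}}$ and there is no starting error in $L(G,\gamma^N_{cons})$ (i.e. $f^N_{cons}(\epsilon)\neq\emptyset$). If $N_{mcmc}$ is defined and $N\ge N_{mcmc}+1$, then $L(G,\gamma^N_{cons})=\overline{K^\uparrow}$.
   Context: Standard LLP setup. $\Sigma=\Sigma_c\,\dot\cup\,\Sigma_{uc}$ is a finite alphabet partitioned into controllable and uncontrollable events. The plant $G$ has generated language $L(G)$ and marked language $L_m(G)$ with $L(G)=\overline{L_m(G)}$ ($\overline{M}$ = set of prefixes of strings in $M$). The legal language $K\subseteq L_m(G)$ satisfies $K=\overline{K}\cap L_m(G)$ ($K$ need not be prefix-closed). For a prefix-closed $L$, $M$ is controllable w.r.t. $L$ if $\overline{M}\Sigma_{uc}\cap L\subseteq\overline{M}$; $K^\uparrow$ is the supremal sublanguage of $K$ controllable w.r.t. $L(G)$. For a language $L$ and $s\in\Sigma^*$: $L/s=\{t: st\in L\}$; $L|_N=\{t\in L:|t|\le N\}$; $\Sigma_{L(G)}(s)=\{\sigma\in\Sigma: s\sigma\in L(G)\}$. $M^{\uparrow/s|_N}$ is the supremal sublanguage of $M$ controllable w.r.t. $L(G)/s|_N$. Conservative attitude: $f^N_{cons}(s)=[K/s|_{N-1}]^{\uparrow/s|_N}$; control policy $\gamma^N_{cons}(s)=(\overline{f^N_{cons}(s)}\cap\Sigma)\cup(\Sigma_{uc}\cap\Sigma_{L(G)}(s))$. Closed-loop language $L(G,\gamma)$: $\epsilon\in L(G,\gamma)$, and $s\sigma\in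 L(G,\gamma)$ iff $s\in L(G,\gamma)$, $s\sigma\in L(G)$, $\sigma\in\gamma(s)$. Define $L_c(G)=\{s\in L(G): s\sigma\notin L(G)\ \forall\sigma\in\Sigma_{uc}\}$ and $K_{mc}=K\cap L_c(G)$. Then $N_{mcmc}=\max\{|t|: \exists s\in K_{mc}\cup\{\epsilon\},\ st\in K_{mc}\text{ and } sv\notin K_{mc}\text{ for every nonempty proper prefix } v\text{ of } t\}$ if this maximum exists; otherwise undefined. *)

(* Defs.v *)
From mathcomp Require Import all_boot.
Set Implicit Arguments. Unset Strict Implicit. Unset Printing Implicit Defensive.

Section Lang.
Variable Sigma : finType.

Definition word := seq Sigma.
Definition lang := word -> Prop.

Definition lsub (M1 M2 : lang) : Prop := forall s, M1 s -> M2 s.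
Definition leq_lang (M1 M2 : lang) : Prop := forall s, M1 s <-> M2 s.

Definition pclos (M : lang) : lang := fun s => exists t, M (s ++ t).

Definition lquot (L : lang) (s : word) : lang := fun t => L (s ++ t).

Definition ltrunc (L : lang) (N : nat) : lang := fun t => L t /\ size t <= N.

(* M controllable w.r.t. the prefix-closed L, uncontrollable events uc *)
Definition controllable (uc : {set Sigma}) (L M : lang) : Prop :=
  forall s sigma, pclos M s -> sigma \in uc -> L (rcons s sigma) ->
    pclos M (rcons s sigma).

Definition supcon (uc : {set Sigma}) (L M : lang) : lang :=
  fun s => exists M' : lang, lsub M' M /\ controllable uc L M' /\ M' s.

(* Conservative attitude: f^N_cons(s) = [K/s|_{N-1}]^{up/s|_N},
   with L = L(G) the generated language *)
Definition fcons (uc : {set Sigma}) (L K : lang) (N : nat) (s : word) : lang :=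
  supcon uc (ltrunc (lquot L s) N) (ltrunc (lquot K s) (N - 1)).

Definition gcons (uc : {set Sigma}) (L K : lang) (N : nat) (s : word)
  (sigma : Sigma) : Prop :=
  pclos (fcons uc L K N s) [:: sigma] \/ (sigma \in uc /\ L (rcons s sigma)).

Inductive closed_loop (L : lang) (gamma : word -> Sigma -> Prop) : lang :=
| cl_nil : closed_loop L gamma [::]
| cl_rcons s sigma : closed_loop L gamma s -> L (rcons s sigma) ->
    gamma s sigma -> closed_loop L gamma (rcons s sigma).

Definition Lcomp (uc : {set Sigma}) (L : lang) : lang :=
  fun s => L s /\ forall sigma, sigma \in uc -> ~ L (rcons s sigma).

Definition Kmc (uc : {set Sigma}) (L K : lang) : lang :=
  fun s => K s /\ Lcomp uc L s.

(* n belongs to the set whose maximum defines N_mcmc *)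
Definition mcmc_len (uc : {set Sigma}) (L K : lang) (n : nat) : Prop :=
  exists s t : word,
    (Kmc uc L K s \/ s = [::]) /\ Kmc uc L K (s ++ t) /\
    (forall k, 0 < k < size t -> ~ Kmc uc L K (s ++ take k t)) /\
    size t = n.

Definition Nmcmc_is (uc : {set Sigma}) (L K : lang) (n : nat) : Prop :=
  mcmc_len uc L K n /\ forall m, mcmc_len uc L K m -> m <= n.

End Lang.

(* Main.v *)
Require Import Defs.
From mathcomp Require Import all_boot.
From mathcomp Require Import zify.
From Stdlib Require Import Classical.

Set Implicit Arguments. Unset Strict Implicit. Unset Printing Implicit Defensive.

Section Pf.
Variable Sigma : finType.
Variable uc : {set Sigma}.
Variables Lm K : lang Sigma.
Variables N n : nat.

Local Notation L := (pclos Lm).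
Local Notation KM := (Kmc uc (pclos Lm) K).
Local Notation KU := (supcon uc (pclos Lm) K).

Lemma pclos_pre (M : lang Sigma) x y : pclos M (x ++ y) -> pclos M x.
Proof. by case=> t; rewrite -catA => H; exists (y ++ t). Qed.

Lemma supcon_ctrl (L0 M : lang Sigma) : controllable uc L0 (supcon uc L0 M).
Proof.
move=> s a [t [M' [HM [Hc HMt]]]] Ha HL.
have [t' Ht'] : pclos M' (rcons s a) by apply: Hc => //; exists t.
by exists t'; exists M'.
Qed.

Lemma supcon_sub (L0 M : lang Sigma) : lsub (supcon uc L0 M) M.
Proof. by move=> s [M' [H [_ H']]]; apply: H. Qed.

Lemma supcon_max (L0 M M' : lang Sigma) :
  lsub M' M -> controllable uc L0 M' -> lsub M' (supcon uc L0 M).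
Proof. by move=> H1 H2 s Hs; exists M'. Qed.

Lemma minP (Q : nat -> Prop) k : Q k ->
  exists k', [/\ Q k', k' <= k & forall j, j < k' -> ~ Q j].
Proof.
elim: k {-2}k (leqnn k) => [|m IH] k Hk Qk.
  by exists k; split => // j; lia.
case: (classic (exists j, j < k /\ Q j)) => [[j [Hj Qj]]|H].
  have [k' [Q' Hk' Hmin]] := IH j ltac:(lia) Qj.
  by exists k'; split => //; lia.
by exists k; split => // j Hj Qj; apply H; exists j.
Qed.

Lemma split_lem (y z s t : word Sigma) : y ++ z = s ++ t ->
  (exists y', y = s ++ y' /\ t = y' ++ z) \/ (exists z', s = y ++ z' /\ z' <> [::]).
Proof.
elim: y s => [|a y IH] [|b s] /=.
- by move=> ->; left; exists [::].
- by move=> _; right; exists (b :: s).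
- by move=> <-; left; exists (a :: y).
- case=> -> /IH [[y' [-> ->]]|[z' [-> Hz]]]; [left; exists y' | right; exists z']; by [].
Qed.

Lemma glue (P : word Sigma -> Prop) a x w :
  (forall k, 0 < k < size x -> ~ P (a ++ take k x)) ->
  (forall j, j < size w -> ~ P (a ++ x ++ take j w)) ->
  forall k, 0 < k < size x + size w -> ~ P (a ++ take k (x ++ w)).
Proof.
move=> H1 H2 k Hk; rewrite take_cat; case: ltnP => Hkx.
  by apply: H1; lia.
by apply: H2; lia.
Qed.

Hypothesis HKLm : lsub K Lm.
Hypothesis HKmc : leq_lang (pclos K) (pclos KM).
Hypothesis Hn : Nmcmc_is uc (pclos Lm) K n.
Hypothesis HN : n + 1 <= N.

Definition seg (s0 u : word Sigma) := (KM s0 \/ s0 = [::]) /\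
  forall k, 0 < k <= size u -> ~ KM (s0 ++ take k u).
Definition next0 (v w : word Sigma) := KM (v ++ w) /\
  forall j, j < size w -> ~ KM (v ++ take j w).
Definition nxt (s t : word Sigma) := KM (s ++ t) /\
  forall k, 0 < k < size t -> ~ KM (s ++ take k t).

Lemma K_L s : K s -> L s.
Proof. by move=> H; exists [::]; rewrite cats0; apply: HKLm. Qed.

Lemma KU_pK s : pclos KU s -> pclos K s.
Proof. by case=> t H; exists t; apply: (supcon_sub H). Qed.

Lemma KU_L s : pclos KU s -> L s.
Proof. by case=> t /supcon_sub /HKLm H; exists t. Qed.

Lemma first v w : KM (v ++ w) -> exists k, k <= size w /\ next0 v (take k w).
Proof.
move=> H.
have H' : (fun j => KM (v ++ take j w)) (size w) by rewrite /= take_size.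
have [k [Qk Hk Hmin]] := @minP (fun j => KM (v ++ take j w)) (size w) H'.
exists k; split => //; split => // j.
rewrite size_takel // => Hj; rewrite take_takel; last lia.
by apply: Hmin.
Qed.

Lemma seg_rcons s0 u a : seg s0 u -> ~ KM (s0 ++ rcons u a) -> seg s0 (rcons u a).
Proof.
move=> [H1 H2] H; split => // k; rewrite size_rcons => Hk.
case: (ltnP k (size u).+1) => Hku.
  by rewrite -cats1 takel_cat; [apply: H2; lia | lia].
have -> : k = size (rcons u a) by rewrite size_rcons; lia.
by rewrite take_size.
Qed.

Lemma dec s : exists s0 u, s = s0 ++ u /\ seg s0 u.
Proof.
elim/last_ind: s => [|s a [s0 [u [-> Hs]]]].
  by exists [::], [::]; split => //; split; [right | move=> k /=; lia].
case: (classic (KM (rcons (s0 ++ u) a))) => Hk.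
  exists (rcons (s0 ++ u) a), [::]; rewrite cats0; split => //.
  by split; [left | move=> k /=; lia].
exists s0, (rcons u a); rewrite rcons_cat; split => //.
by apply: (seg_rcons Hs); rewrite -rcons_cat.
Qed.

Lemma len s0 u : seg s0 u -> pclos K (s0 ++ u) -> size u <= n.
Proof.
move=> [H1 H2] /HKmc [y Hy].
have [k [Hk [Hk1 Hk2]]] := first Hy.
have : mcmc_len uc (pclos Lm) K (size u + k).
  exists s0, (u ++ take k y); split => //; split; first by rewrite catA.
  split; last by rewrite size_cat size_takel.
  move=> j Hj.
  apply: (@glue KM s0 u (take k y)).
  - by move=> i Hi; apply: H2; lia.
  - by move=> i Hi; rewrite catA; apply: Hk2.
  - by rewrite -size_cat.
move/(proj2 Hn); lia.
Qed.

Lemma nxt_len s t : nxt s t -> size t <= n.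
Proof.
have [s0 [u [-> [H1 H2]]]] := dec s.
move=> [Ht1 Ht2].
case: (eqVneq (size u) 0) => Hu.
  move: Hu Ht1 Ht2; case: u H2 => // _ _; rewrite cats0 => Ht1 Ht2.
  have : mcmc_len uc (pclos Lm) K (size t) by exists s0, t.
  by move/(proj2 Hn).
have : mcmc_len uc (pclos Lm) K (size u + size t).
  exists s0, (u ++ t); split => //; split; first by rewrite catA.
  split; last by rewrite size_cat.
  move=> j Hj.
  apply: (@glue KM s0 u t) => //.
  - by move=> i Hi; apply: H2; lia.
  - move=> i Hi; case: (eqVneq i 0) => [->|Hi0].
      rewrite take0 cats0; have := H2 (size u); rewrite take_size; apply; lia.
    by rewrite catA; apply: Ht2; lia.
  - by rewrite -size_cat.
move/(proj2 Hn); lia.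
Qed.

Lemma step v : pclos KU v -> ~ KM v -> exists a, pclos KU (rcons v a).
Proof.
move=> [x Hx] HK; case: x Hx => [|a x] Hx.
  rewrite cats0 in Hx.
  have Kv := supcon_sub Hx.
  have : ~ (forall a, a \in uc -> ~ L (rcons v a)).
    by move=> H; apply: HK; split => //; split => //; apply: K_L.
  move=> Hn'; have [a Ha'] := not_all_ex_not _ _ Hn'.
  have [Ha HL'] := imply_to_and _ _ Ha'.
  have HL := NNPP _ HL'.
  exists a; apply: supcon_ctrl => //.
  by exists [::]; rewrite cats0.
by exists a; exists x; rewrite cat_rcons.
Qed.

Lemma ext' m : forall s0 u, seg s0 u -> n - size u < m -> pclos KU (s0 ++ u) ->
  exists w, KM (s0 ++ u ++ w) /\ pclos KU (s0 ++ u ++ w).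
Proof.
elim: m => [|m IH] s0 u Hseg Hm Hp; first lia.
case: (classic (KM (s0 ++ u))) => Hk.
  by exists [::]; rewrite cats0.
have [a Ha] := step Hp Hk.
case: (classic (KM (s0 ++ rcons u a))) => Hk'.
  exists [:: a]; rewrite catA cats1; split => //.
  by rewrite rcons_cat.
have Hseg' := seg_rcons Hseg Hk'.
rewrite rcons_cat in Ha.
have Hl := len Hseg' (KU_pK Ha).
rewrite size_rcons in Hl.
have [w [Hw1 Hw2]] := IH s0 (rcons u a) Hseg' ltac:(rewrite size_rcons; lia) Ha.
by exists (a :: w); rewrite cat_rcons in Hw1 Hw2.
Qed.

Lemma ext v : pclos KU v -> exists w, KM (v ++ w) /\ pclos KU (v ++ w).
Proof.
have [s0 [u [-> Hs]]] := dec v; move=> Hp.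
have [w [H1 H2]] := @ext' (n - size u).+1 s0 u Hs (ltnSn _) Hp.
by exists w; rewrite -catA.
Qed.

Definition Mp (s : word Sigma) : lang Sigma :=
  fun t => size t <= N - 1 /\ nxt s t /\ pclos KU (s ++ t).

Lemma Mp_ctrl s : controllable uc (ltrunc (lquot L s) N) (Mp s).
Proof.
move=> x a [y [_ [[Ht1 Ht2] Hp]]] Ha [HL _].
rewrite /lquot -rcons_cat in HL.
case: (classic (KM (s ++ x))) => Hx.
  by exfalso; case: Hx => _ [_ H]; apply: (H a Ha).
have Hc : pclos KU (rcons (s ++ x) a).
  apply: supcon_ctrl => //.
  by apply: (@pclos_pre _ _ y); rewrite -catA.
have [w [Hw1 Hw2]] := ext Hc.
have [k [Hk [Hk1 Hk2]]] := first Hw1.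
have Hnx : nxt s (rcons x a ++ take k w).
  split; first by rewrite catA -rcons_cat.
  move=> j Hj; apply: (@glue KM s (rcons x a) (take k w)) => //.
  - move=> i; rewrite size_rcons => Hi.
    case: (eqVneq i (size x)) => [->|Hix].
      by rewrite -cats1 takel_cat // take_size.
    rewrite -cats1 takel_cat; last lia.
    have := Ht2 i; rewrite takel_cat; last lia.
    by move=> H; apply: H; rewrite size_cat; lia.
  - by move=> i Hi; rewrite catA -rcons_cat; apply: Hk2.
  - by rewrite -size_cat.
exists (take k w); split; [|split] => //.
  by have := nxt_len Hnx; lia.
rewrite catA -rcons_cat.
by apply: (@pclos_pre _ _ (drop k w)); rewrite -catA cat_take_drop.
Qed.

Lemma Mp_sub s : lsub (Mp s) (ltrunc (lquot K s) (N - 1)).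
Proof. by move=> t [H1 [[[HK _] _] _]]. Qed.

Lemma fcons_of s a : pclos KU (rcons s a) -> exists t, fcons uc L K N s (a :: t).
Proof.
move=> H.
have [w [Hw1 Hw2]] := ext H.
have [k [Hk [Hk1 Hk2]]] := first Hw1.
have Hnx : nxt s (a :: take k w).
  split; first by rewrite -cat_rcons.
  move=> j Hj; apply: (@glue KM s [:: a] (take k w) _ _ j) => //.
  - by move=> i /=; lia.
  - by move=> i Hi; rewrite catA cats1; apply: Hk2.
exists (take k w).
apply: (supcon_max (@Mp_sub s) (@Mp_ctrl s)).
split; first by have := nxt_len Hnx; lia.
split => //.
rewrite -cat_rcons.
by apply: (@pclos_pre _ _ (drop k w)); rewrite -catA cat_take_drop.
Qed.

Lemma incl s t : (forall y z, s = y ++ z -> z <> [::] -> pclos KU y) ->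
  fcons uc L K N s t -> KU (s ++ t).
Proof.
move=> Hpre Hf.
apply: (@supcon_max _ _
  (fun x => KU x \/ exists t, x = s ++ t /\ fcons uc L K N s t)).
- move=> x [/supcon_sub //| [t' [-> Hf']]].
  by have [Hk _] := supcon_sub Hf'.
- move=> y a [z Hz] Ha HL; case: Hz => [Hz | [t' [Heq Hf']]].
    have [z' Hz'] := supcon_ctrl (ex_intro _ z Hz) Ha HL.
    by exists z'; left.
  case: (split_lem Heq) => [[y' [Hy Ht']] | [z' [Hs Hz']]].
    subst y t'.
    have [_ Hsz] := supcon_sub Hf'.
    rewrite size_cat in Hsz.
    have Hpc : pclos (fcons uc L K N s) y' by exists z.
    have Htr : ltrunc (lquot L s) N (rcons y' a).
      by split; [rewrite /lquot -rcons_cat | rewrite size_rcons; lia].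
    have [z'' Hz''] := supcon_ctrl Hpc Ha Htr.
    exists z''; right; exists (rcons y' a ++ z''); split => //.
    by rewrite rcons_cat catA.
  have [z'' Hz''] := supcon_ctrl (Hpre y z' Hs Hz') Ha HL.
  by exists z''; left.
- by right; exists t.
Qed.

Hypothesis Hf0 : exists t, fcons uc L K N [::] t.

Lemma cl_sub s : closed_loop L (gcons uc L K N) s -> pclos KU s.
Proof.
move=> Hcl; elim: Hcl => [|s1 a Hs IH HL Hg].
  have [t Ht] := Hf0.
  exists t; apply: (incl _ Ht).
  by move=> [|? ?] [|? ?].
case: Hg => [[t Ht] | [Ha _]].
  have := incl _ Ht.
  move=> H; exists t; rewrite -cats1 -catA; apply: H.
  by move=> y z Hsz _; subst s1; apply: (pclos_pre IH).
exact: supcon_ctrl IH Ha HL.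
Qed.

Lemma sub_cl s : pclos KU s -> closed_loop L (gcons uc L K N) s.
Proof.
elim/last_ind: s => [|s a IH] H; first by constructor.
apply: cl_rcons.
- by apply: IH; rewrite -cats1 in H; apply: (pclos_pre H).
- exact: KU_L H.
- left; have [t Ht] := fcons_of H; by exists t.
Qed.

End Pf.

Theorem theorem12 (Sigma : finType) (uc : {set Sigma}) (Lm K : lang Sigma) (N : nat) :
  (* L(G) = closure of L_m(G); K ⊆ L_m(G) and K = \overline{K} ∩ L_m(G) *)
  lsub K Lm ->
  leq_lang K (fun s => pclos K s /\ Lm s) ->
  (* \overline{K} = \overline{K_mc} *)
  leq_lang (pclos K) (pclos (Kmc uc (pclos Lm) K)) ->
  (* no starting error: f^N_cons(epsilon) <> empty *)
  (exists t, fcons uc (pclos Lm) K N [::] t) ->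
  (* N_mcmc defined and N >= N_mcmc + 1 *)
  (exists n, Nmcmc_is uc (pclos Lm) K n /\ n + 1 <= N) ->
  leq_lang (closed_loop (pclos Lm) (gcons uc (pclos Lm) K N))
           (pclos (supcon uc (pclos Lm) K)).
Proof.
move=> H1 _ H3 H4 [n [Hn HN]] s; split.
  by eapply cl_sub; eassumption.
by eapply sub_cl; eassumption.
Qed.
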